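(* Let $(V,v)$ be a pair of continuous upper and lower probabilities on $(\Omega,\mathcal{F})$ and let $\mathcal{F}_0$ be a sub-$\sigma$-algebra of $\mathcal{F}$ with $v(A)\in\{0,1\}$ for all $A\in\mathcal{F}_0$. Then for every $\mathcal{F}_0$-measurable real-valued random variable $\xi$, $$v\Big(\Big\{\int_{\Omega}\xi\, dv \le\xi\le\int_{\Omega}\xi\, dV\Big\}\Big)=1,\quad V\Big(\Big\{\xi=\int_{\Omega}\xi\, dv\Big\}\Big)=1,\quad V\Big(\Big\{\xi=\int_{\Omega}\xi\, dV\Big\}\Big)=1.$$
   Context: For a nonempty set $\mathcal{P}$ of finitely additive probabilities on $\mathcal{F}$, $V(A)=\sup_{P\in\mathcal{P}}P(A)$ and $v(A)=\inf_{P\in\mathcal{P}}P(A)$ are the upper and lower probabilities; they are continuous if $V(A_n)\to V(A)$ and $v(A_n)\to v(A)$ whenever $A_n\uparrow A$ or $A_n\downarrow A$. Choquet integral: $\int_{\Omega}\xi\, d\mu=\int_{0}^{\infty}\mu(\{\xi\ge t\})\,dt+\int_{-\infty}^0[\mu(\{\xi\ge t\})-1]\,dt$. *)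

(* Defs.v *)
From HB Require Import structures.
From mathcomp Require Import all_boot all_order all_algebra.
From mathcomp Require Import all_classical all_reals all_analysis.
Set Implicit Arguments. Unset Strict Implicit. Unset Printing Implicit Defensive.
Import Order.TTheory GRing.Theory Num.Theory numFieldNormedType.Exports.
Local Open Scope classical_set_scope.
Local Open Scope ring_scope.

Section Defs.
Context {d : measure_display} {T : measurableType d} {R : realType}.

(* A finitely additive probability on the sigma-algebra F = measurable of T
   (its values outside F are irrelevant). *)
Definition fa_probability (P : set T -> R) : Prop :=
  [/\ P setT = 1,
      (forall A, measurable A -> 0 <= P A) &
      (forall A B, measurable A -> measurable B -> A `&` B = set0 ->
         P (A `|` B) = P A + P B)].

Definition upper_prob (PP : set (set T -> R)) (A : set T) : R :=
  sup [set P A | P in PP].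
Definition lower_prob (PP : set (set T -> R)) (A : set T) : R :=
  inf [set P A | P in PP].

Definition continuous_setfun (mu : set T -> R) : Prop :=
  (forall A : (set T)^nat, (forall n, measurable (A n)) ->
     (forall n, A n `<=` A n.+1) ->
     (fun n => mu (A n)) @ \oo --> mu (\bigcup_n A n)) /\
  (forall A : (set T)^nat, (forall n, measurable (A n)) ->
     (forall n, A n.+1 `<=` A n) ->
     (fun n => mu (A n)) @ \oo --> mu (\bigcap_n A n)).

Definition choquet (mu : set T -> R) (xi : T -> R) : \bar R :=
  adde
   (\int[lebesgue_measure]_(t in `[(0:R), +oo[%classic)
      ((mu [set w | t <= xi w])%:E))
   (\int[lebesgue_measure]_(t in `]-oo, (0:R)[%classic)
      ((mu [set w | t <= xi w] - 1)%:E)).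

End Defs.

(* Main.v *)
Require Import Defs.
From HB Require Import structures.
From mathcomp Require Import all_boot all_order all_algebra.
From mathcomp Require Import all_classical all_reals all_analysis.
From mathcomp Require Import lra.
Import Order.TTheory GRing.Theory Num.Theory numFieldNormedType.Exports.
Local Open Scope classical_set_scope.
Local Open Scope ring_scope.
Set Implicit Arguments. Unset Strict Implicit. Unset Printing Implicit Defensive.

Lemma choquet_step (d : measure_display) (T : measurableType d) (R : realType)
  (mu : set T -> R) (xi : T -> R) (c : R) :
  (forall t, mu [set w | t <= xi w] = if t <= c then 1 else 0) ->
  choquet mu xi = c%:E.
Proof.
move=> H; rewrite /choquet.
under eq_integral do rewrite H.
under [X in adde _ X]eq_integral do rewrite H.
have [c0|c0] := leP 0 c.
  rewrite [X in adde _ X]integral0_eq; last first.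
    move=> t; rewrite /= in_itv /= => t0.
    by rewrite (ltW (lt_le_trans t0 c0)) subrr.
  have -> : (\int[lebesgue_measure]_(x in `[0%R, +oo[%classic) ((if x <= c then 1 else 0)%R)%:E
     = \int[lebesgue_measure]_(x in `[0%R, +oo[%classic) (\1_(`[0%R, c]%classic) x)%:E)%E.
    apply: eq_integral => t; rewrite inE /= in_itv /= andbT => t0.
    rewrite indicE; case: ifP => tc; [rewrite mem_set // | rewrite memNset //]; rewrite /= in_itv /= ?t0 ?tc //.
  rewrite (@integral_indic _ _ _ lebesgue_measure _ (measurable_itv _) _ (measurable_itv _)).
  rewrite setIidl; last by move=> t; rewrite /= !in_itv /= => /andP[->].
  have := @lebesgue_measure_itv R `[0, c]. rewrite /= => ->.
  rewrite lte_fin; have [h|h] := ltP 0 c; first by rewrite oppr0 adde0; exact: (congr1 EFin (addr0 c)).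
  have -> : c = 0 by apply/eqP; rewrite eq_le h c0.
  exact: (congr1 EFin (addr0 0)).
  rewrite integral0_eq; last first.
  move=> t; rewrite /= in_itv /= andbT => t0.
  by rewrite leNgt (lt_le_trans c0 t0).
have -> : (\int[lebesgue_measure]_(x in `]-oo, 0%R[%classic) (((if x <= c then 1 else 0) - 1)%R)%:E
   = \int[lebesgue_measure]_(x in `]-oo, 0%R[%classic) (- (\1_(`]c, 0%R[%classic) x)%:E))%E.
  apply: eq_integral => t; rewrite inE /= in_itv /= => t0.
  rewrite indicE; congr EFin; case: ifP => tc.
    by rewrite memNset ?subrr ?mulr0n ?oppr0 // /= in_itv /= ltNge tc.
  by rewrite mem_set ?sub0r ?mulr1n // /= in_itv /= t0 ltNge tc.
rewrite integralN; last first.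
  rewrite [X in (_ +? - X)%E]integral0_eq => [|t _].
    by rewrite oppe0 fin_num_adde_defl.
  rewrite funenegE; apply/max_idPr; rewrite leeNl oppe0 lee_fin.
  by rewrite indicE ler0n.
rewrite integral_indic; last 2 first.
  exact: measurable_itv.
  exact: measurable_itv.
rewrite setIidl; last by move=> t; rewrite /= !in_itv /= => /andP[_ ->].
have := @lebesgue_measure_itv R `]c, 0[. rewrite /= lte_fin c0 => ->.
have e : (0 + - (0 + - c) = c)%R by rewrite !add0r opprK.
exact: (congr1 EFin e).
Qed.


Lemma threshold (R : realType) (Q : R -> Prop) :
  (forall s t, Q s -> t <= s -> Q t) ->
  (exists t, Q t) -> (exists t, ~ Q t) ->
  (forall a, (forall n : nat, Q (a - n.+1%:R^-1)) -> Q a) ->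
  exists a, forall t, Q t <-> t <= a.
Proof.
move=> mono [t0 Qt0] [t1 nQt1] cl.
have ub : ubound Q t1.
  move=> t Qt; rewrite leNgt; apply/negP => h; apply: nQt1; exact: mono Qt (ltW h).
have lt_sup : forall t, t < sup Q -> Q t.
  move=> t /(sup_gt (ex_intro _ t0 Qt0)) [y Qy ty]; exact: mono Qy (ltW ty).
exists (sup Q) => t; split.
  by move=> Qt; apply: ub_le_sup => //; exists t1.
move=> tle; have Qs : Q (sup Q).
  apply: cl => n; apply: lt_sup.
  by rewrite gtrBl invr_gt0 ltr0Sn.
exact: mono Qs tle.
Qed.

Lemma lim_const (R : realType) (u : nat -> R) c l :
  (forall n, u n = c) -> u @ \oo --> l -> l = c.
Proof.
move=> Hu; have -> : u = fun=> c by apply/funext.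
move=> h; exact: (cvg_unique _ h (cvg_cst c)).
Qed.

Lemma archi_ex (R : realType) (x : R) : exists n : nat, `|x| < n%:R.
Proof. by exists (Num.bound `|x|); apply: archi_boundP. Qed.

Section Main.
Context {d : measure_display} {T : measurableType d} {R : realType}.
Variable PP : set (set T -> R).
Hypothesis HPP : PP !=set0.
Hypothesis Hfa : forall P, PP P -> fa_probability P.

Local Notation v := (lower_prob PP).
Local Notation V := (upper_prob PP).
Definition full (A : set T) := forall P, PP P -> P A = 1.
Definition null (A : set T) := forall P, PP P -> P A = 0.

Lemma P_add P A B : PP P -> measurable A -> measurable B -> A `&` B = set0 ->
  P (A `|` B) = P A + P B.
Proof. by move=> /Hfa[_ _ h]; apply: h. Qed.
Lemma P_ge0 P A : PP P -> measurable A -> 0 <= P A.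
Proof. by move=> /Hfa[_ h _]; apply: h. Qed.
Lemma P_T P : PP P -> P setT = 1.
Proof. by case/Hfa. Qed.
Lemma P_0 P : PP P -> P set0 = 0.
Proof.
move=> HP; have := P_add HP measurable0 measurable0 (setI0 _).
rewrite setU0 => h; lra.
Qed.
Lemma P_C P A : PP P -> measurable A -> P (~` A) = 1 - P A.
Proof.
move=> HP mA; have := P_add HP mA (measurableC mA) (setICr A).
rewrite setUCr P_T // => h; lra.
Qed.
Lemma P_le1 P A : PP P -> measurable A -> P A <= 1.
Proof. move=> HP mA; have := P_ge0 HP (measurableC mA); rewrite P_C //; lra. Qed.
Lemma P_mono P A B : PP P -> measurable A -> measurable B -> A `<=` B -> P A <= P B.
Proof.
move=> HP mA mB AB; rewrite -(setDUK AB) P_add //; last 2 first.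
- exact: measurableD.
- exact: setDIK.
have := P_ge0 HP (measurableD mB mA); lra.
Qed.

Lemma img_ne A : [set P A | P in PP] !=set0.
Proof. by case: HPP => P HP; exists (P A); exists P. Qed.
Lemma img_lb A : measurable A -> lbound [set P A | P in PP] 0.
Proof. by move=> mA _ [P HP <-]; exact: P_ge0. Qed.
Lemma img_ub A : measurable A -> ubound [set P A | P in PP] 1.
Proof. by move=> mA _ [P HP <-]; exact: P_le1. Qed.
Lemma v_le P A : PP P -> measurable A -> v A <= P A.
Proof. by move=> HP mA; apply: ge_inf; [exists 0; exact: img_lb | exists P]. Qed.
Lemma V_ge P A : PP P -> measurable A -> P A <= V A.
Proof. by move=> HP mA; apply: ub_le_sup; [exists 1; exact: img_ub | exists P]. Qed.
Lemma full_v A : measurable A -> full A -> v A = 1.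
Proof.
move=> mA fA; case: HPP => P0 HP0; apply/eqP; rewrite eq_le; apply/andP; split.
  by rewrite -(fA _ HP0); apply: v_le.
by apply: lb_le_inf; [exact: img_ne | move=> _ [P HP <-]; rewrite fA].
Qed.
Lemma v_full A : measurable A -> v A = 1 -> full A.
Proof.
move=> mA vA P HP; apply/eqP; rewrite eq_le P_le1 //= -vA v_le //.
Qed.
Lemma null_V A : measurable A -> null A -> V A = 0.
Proof.
move=> mA nA; case: HPP => P0 HP0; apply/eqP; rewrite eq_le; apply/andP; split.
  by apply: ge_sup; [exact: img_ne | move=> _ [P HP <-]; rewrite nA].
by rewrite -(nA _ HP0); apply: V_ge.
Qed.
Lemma V_null A : measurable A -> V A = 0 -> null A.
Proof.
move=> mA VA P HP; apply/eqP; rewrite eq_le P_ge0 // andbT -VA V_ge //.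
Qed.
Lemma V_one A : measurable A -> v (~` A) = 0 -> V A = 1.
Proof.
move=> mA vC; apply/eqP; rewrite eq_le; apply/andP; split.
  by apply: ge_sup; [exact: img_ne| exact: img_ub].
rewrite leNgt; apply/negP => VA1.
have : 1 - V A <= v (~` A).
  apply: lb_le_inf; first exact: img_ne.
  move=> _ [P HP <-]; rewrite P_C //; have := V_ge HP mA; lra.
rewrite vC; lra.
Qed.


Variable xi : T -> R.
Variable F0 : set (set T).
Hypothesis HF0 : F0 `<=` measurable.
Hypothesis H01 : forall A, F0 A -> v A = 0 \/ v A = 1.
Hypothesis Hxi : forall B : set R, measurable B -> F0 (xi @^-1` B).
Hypothesis HcV : continuous_setfun V.
Hypothesis Hcv : continuous_setfun v.

Lemma mpre B : measurable B -> measurable (xi @^-1` B).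
Proof. by move=> mB; apply: HF0; apply: Hxi. Qed.
Lemma v_nfull B : measurable B -> ~ full (xi @^-1` B) -> v (xi @^-1` B) = 0.
Proof.
move=> mB nf; case: (H01 (Hxi mB)) => // /(v_full (mpre mB)) //.
Qed.
Lemma V_nnull B : measurable B -> ~ null (xi @^-1` B) -> V (xi @^-1` B) = 1.
Proof.
move=> mB nn; apply: V_one (mpre mB) _; rewrite preimage_setC.
apply: v_nfull; first exact: measurableC.
move=> fC; apply: nn => P HP; have := fC P HP.
rewrite -preimage_setC P_C //; [lra | exact: mpre].
Qed.

Lemma SE t : [set w | t <= xi w] = xi @^-1` `[t, +oo[.
Proof. by apply/seteqP; split => w /=; rewrite in_itv /= andbT. Qed.
Lemma GE c : [set w | c < xi w] = xi @^-1` `]c, +oo[.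
Proof. by apply/seteqP; split => w /=; rewrite in_itv /= andbT. Qed.
Lemma mS t : measurable [set w | t <= xi w].
Proof. by rewrite SE; apply: mpre; exact: measurable_itv. Qed.
Lemma mG t : measurable [set w | t < xi w].
Proof. by rewrite GE; apply: mpre; exact: measurable_itv. Qed.
Lemma mEQ t : measurable [set w | xi w = t].
Proof. exact: (mpre (measurable_set1 t)). Qed.

Lemma vS0 t : ~ full [set w | t <= xi w] -> v [set w | t <= xi w] = 0.
Proof. by rewrite SE => h; apply: v_nfull => //; exact: measurable_itv. Qed.
Lemma VS1 t : ~ null [set w | t <= xi w] -> V [set w | t <= xi w] = 1.
Proof. by rewrite SE => h; apply: V_nnull => //; exact: measurable_itv. Qed.
Lemma vG0 t : ~ full [set w | t < xi w] -> v [set w | t < xi w] = 0.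
Proof. by rewrite GE => h; apply: v_nfull => //; exact: measurable_itv. Qed.
Lemma VG1 t : ~ null [set w | t < xi w] -> V [set w | t < xi w] = 1.
Proof. by rewrite GE => h; apply: V_nnull => //; exact: measurable_itv. Qed.
Lemma VEQ1 t : ~ null [set w | xi w = t] -> V [set w | xi w = t] = 1.
Proof. by move=> h; apply: (V_nnull (measurable_set1 t)). Qed.

Lemma S_incr (n : nat) : [set w | - n%:R <= xi w] `<=` [set w | - n.+1%:R <= xi w].
Proof. by move=> w /= h; apply: le_trans h; rewrite lerN2 ler_nat. Qed.
Lemma S_decr (n : nat) : [set w | n.+1%:R <= xi w] `<=` [set w | n%:R <= xi w].
Proof. by move=> w /= h; apply: le_trans h; rewrite ler_nat. Qed.
Lemma S_cupT : \bigcup_n [set w | - n%:R <= xi w] = setT.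
Proof.
apply/seteqP; split => w // _; have [n hn] := archi_ex (xi w).
exists n => //=; move: hn; rewrite ltr_norml => /andP[h _]; exact: ltW.
Qed.
Lemma S_cap0 : \bigcap_n [set w | n%:R <= xi w] = set0.
Proof.
apply/seteqP; split => w // h; have [n hn] := archi_ex (xi w).
have := h n I; move: hn; rewrite ltr_norml => /andP[_ h1] h2.
by have := lt_le_trans h1 h2; rewrite ltxx.
Qed.
Lemma S_decr2 a (n : nat) :
  [set w | a - n.+2%:R^-1 <= xi w] `<=` [set w | a - n.+1%:R^-1 <= xi w].
Proof.
move=> w /= h; apply: le_trans h; rewrite lerD2l lerN2 lef_pV2 ?posrE ?ler_nat //.
Qed.
Lemma S_cap a : \bigcap_n [set w | a - n.+1%:R^-1 <= xi w] = [set w | a <= xi w].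
Proof.
apply/seteqP; split => w /=.
  move=> h; rewrite leNgt; apply/negP => xa.
  have [k hk] := ltr_add_invr xa; have := h k I; move: hk.
  set i := k.+1%:R^-1 => h1 /= h2; lra.
move=> h n _ /=; apply: le_trans h; rewrite gerBl invr_ge0 ler0n //.
Qed.
Lemma S_incr2 a (n : nat) :
  [set w | a + n.+1%:R^-1 <= xi w] `<=` [set w | a + n.+2%:R^-1 <= xi w].
Proof.
move=> w /= h; apply: le_trans h; rewrite lerD2l lef_pV2 ?posrE ?ler_nat //.
Qed.
Lemma S_cup a : \bigcup_n [set w | a + n.+1%:R^-1 <= xi w] = [set w | a < xi w].
Proof.
apply/seteqP; split => w /=.
  move=> [n _ /= h]; apply: lt_le_trans h; rewrite ltrDl invr_gt0 ltr0Sn //.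
move=> h; have [k hk] := ltr_add_invr h; exists k => //=; exact: ltW.
Qed.


Lemma thr_v : exists a, forall t, full [set w | t <= xi w] <-> t <= a.
Proof.
apply: threshold.
- move=> s t fs ts P HP; have := P_le1 HP (mS t).
  have : P [set w | s <= xi w] <= P [set w | t <= xi w].
    by apply: P_mono => //; [exact: mS|exact: mS| move=> w /=; exact: le_trans].
  rewrite (fs P HP); lra.
- case: (pselect (exists n : nat, full [set w | - n%:R <= xi w])) => [[n hn]|hno].
    by exists (- n%:R).
  exfalso; have := Hcv.1 (fun n => [set w | - n%:R <= xi w]) (fun n => mS _) S_incr.
  rewrite S_cupT => h.
  have e : v setT = 0.
    by apply: (lim_const _ h) => n; apply: vS0 => f; apply: hno; exists n.
  move: e; rewrite full_v //; first by move/eqP; rewrite oner_eq0.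
  by move=> P HP; exact: P_T.
- case: (pselect (exists n : nat, ~ full [set w | n%:R <= xi w])) => [[n hn]|hno].
    by exists n%:R.
  exfalso; have := Hcv.2 (fun n => [set w | n%:R <= xi w]) (fun n => mS _) S_decr.
  rewrite S_cap0 => h.
  have e : v set0 = 1.
    apply: (lim_const _ h) => n; apply: full_v; first exact: mS.
    by have [//|nf] := pselect (full [set w | n%:R <= xi w]); exfalso; apply: hno; exists n.
  case: HPP => P HP; have := v_full measurable0 e HP; rewrite P_0 //.
  by move/eqP; rewrite eq_sym oner_eq0.
- move=> a h; apply: (v_full (mS a)).
  have := Hcv.2 (fun n => [set w | a - n.+1%:R^-1 <= xi w]) (fun n => mS _) (@S_decr2 a).
  rewrite S_cap => hc; apply: (lim_const _ hc) => n; exact: full_v (mS _) (h n).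
Qed.

Lemma thr_V : exists a, forall t, ~ null [set w | t <= xi w] <-> t <= a.
Proof.
apply: threshold.
- move=> s t ns ts nt; apply: ns => P HP; have := P_ge0 HP (mS s).
  have : P [set w | s <= xi w] <= P [set w | t <= xi w].
    by apply: P_mono => //; [exact: mS|exact: mS| move=> w /=; exact: le_trans].
  rewrite (nt P HP); lra.
- case: (pselect (exists n : nat, ~ null [set w | - n%:R <= xi w])) => [[n hn]|hno].
    by exists (- n%:R).
  exfalso; have := HcV.1 (fun n => [set w | - n%:R <= xi w]) (fun n => mS _) S_incr.
  rewrite S_cupT => h.
  have e : V setT = 0.
    apply: (lim_const _ h) => n; apply: null_V; first exact: mS.
    by have [//|nn] := pselect (null [set w | - n%:R <= xi w]); exfalso; apply: hno; exists n.
  case: HPP => P HP; have := V_null measurableT e HP; rewrite P_T //.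
  by move/eqP; rewrite oner_eq0.
- case: (pselect (exists n : nat, null [set w | n%:R <= xi w])) => [[n hn]|hno].
    by exists n%:R.
  exfalso; have := HcV.2 (fun n => [set w | n%:R <= xi w]) (fun n => mS _) S_decr.
  rewrite S_cap0 => h.
  have e : V set0 = 1.
    by apply: (lim_const _ h) => n; apply: VS1 => f; apply: hno; exists n.
  move: e; rewrite null_V //; first by move/eqP; rewrite eq_sym oner_eq0.
  by move=> P HP; exact: P_0.
- move=> a h na.
  have := HcV.2 (fun n => [set w | a - n.+1%:R^-1 <= xi w]) (fun n => mS _) (@S_decr2 a).
  rewrite S_cap => hc.
  have e : V [set w | a <= xi w] = 1 by apply: (lim_const _ hc) => n; exact: VS1.
  by move: e; rewrite (null_V (mS a) na); move/eqP; rewrite eq_sym oner_eq0.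
Qed.

Lemma main_res :
  [/\ v [set w | (choquet v xi <= (xi w)%:E <= choquet V xi)%E] = 1,
      V [set w | (xi w)%:E = choquet v xi] = 1 &
      V [set w | (xi w)%:E = choquet V xi] = 1].
Proof.
have pos (n : nat) : 0 < n.+1%:R^-1 :> R by rewrite invr_gt0 ltr0Sn.
have [a Ha] := thr_v; have [b Hb] := thr_V.
have ca : choquet v xi = a%:E.
  apply: choquet_step => t; case: ifP => ta.
    by apply: full_v (mS t) _; apply/Ha.
  by apply: vS0 => /Ha; rewrite ta.
have cb : choquet V xi = b%:E.
  apply: choquet_step => t; case: ifP => tb.
    by apply: VS1; apply/Hb.
  apply: null_V (mS t) _.
  by have [//|/Hb] := pselect (null [set w | t <= xi w]); rewrite tb.
rewrite ca cb.
have fa : full [set w | a <= xi w] by apply/Ha.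
have nnb : ~ null [set w | b <= xi w] by apply/Hb.
have nfGa : ~ full [set w | a < xi w].
  have := Hcv.1 (fun n => [set w | a + n.+1%:R^-1 <= xi w]) (fun n => mS _) (@S_incr2 a).
  rewrite S_cup => hc.
  have e : v [set w | a < xi w] = 0.
    apply: (lim_const _ hc) => n; apply: vS0 => /Ha h.
    have := pos n; move: h; set i := n.+1%:R^-1; lra.
  move=> f; move: e; rewrite (full_v (mG a) f); by move/eqP; rewrite oner_eq0.
have nGb : null [set w | b < xi w].
  have := HcV.1 (fun n => [set w | b + n.+1%:R^-1 <= xi w]) (fun n => mS _) (@S_incr2 b).
  rewrite S_cup => hc; apply: V_null; first exact: mG.
  apply: (lim_const _ hc) => n; apply: null_V; first exact: mS.
  have [//|/Hb h] := pselect (null [set w | b + n.+1%:R^-1 <= xi w]).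
  by have := pos n; move: h; set i := n.+1%:R^-1; lra.
have SaE c : [set w | xi w = c] `|` [set w | c < xi w] = [set w | c <= xi w].
  apply/seteqP; split => w /=; first by case=> [->|/ltW].
  by rewrite le_eqVlt => /orP[/eqP <-|]; [left|right].
have SaD c : [set w | xi w = c] `&` [set w | c < xi w] = set0.
  by apply/seteqP; split => w // [/= -> ]; rewrite ltxx.
split.
- have -> : [set w | (a%:E <= (xi w)%:E <= b%:E)%E]
      = [set w | a <= xi w] `\` [set w | b < xi w].
    apply/seteqP; split => w /=; rewrite !lee_fin.
      by move=> /andP[-> h2]; split => //; apply/negP; rewrite -leNgt.
    by move=> [h1 /negP]; rewrite -leNgt => h2; rewrite h1 h2.
  apply: full_v; first exact: measurableD (mS a) (mG b).
  move=> P HP.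
  have dj : ([set w | a <= xi w] `&` [set w | b < xi w]) `&`
            ([set w | a <= xi w] `\` [set w | b < xi w]) = set0.
    by apply/seteqP; split => w // [[_ h] [_ h']].
  have := P_add HP (measurableI _ _ (mS a) (mG b)) (measurableD (mS a) (mG b)) dj.
  rewrite setUIDK (fa P HP).
  have := P_mono HP (measurableI _ _ (mS a) (mG b)) (mG b) (@subIsetr _ _ _).
  have := P_ge0 HP (measurableI _ _ (mS a) (mG b)).
  rewrite (nGb P HP); lra.
- have -> : [set w | (xi w)%:E = a%:E] = [set w | xi w = a].
    by apply/seteqP; split => w /=; [move=> [->] | move=> ->].
  apply: VEQ1 => ne; apply: nfGa => P HP.
  have := P_add HP (mEQ a) (mG a) (SaD a); rewrite SaE (fa P HP) (ne P HP); lra.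
- have -> : [set w | (xi w)%:E = b%:E] = [set w | xi w = b].
    by apply/seteqP; split => w /=; [move=> [->] | move=> ->].
  apply: VEQ1 => ne; apply: nnb => P HP.
  have := P_add HP (mEQ b) (mG b) (SaD b); rewrite SaE (ne P HP) (nGb P HP); lra.
Qed.

End Main.

Theorem corollary1 (d : measure_display) (T : measurableType d) (R : realType)
    (PP : set (set T -> R)) (F0 : set (set T)) (xi : T -> R) :
  PP !=set0 ->
  (forall P, PP P -> fa_probability P) ->
  continuous_setfun (upper_prob PP) ->
  continuous_setfun (lower_prob PP) ->
  sigma_algebra setT F0 -> F0 `<=` measurable ->
  (forall A, F0 A -> lower_prob PP A = 0 \/ lower_prob PP A = 1) ->
  (forall B : set R, measurable B -> F0 (xi @^-1` B)) ->
  [/\ lower_prob PP [set w | (choquet (lower_prob PP) xi <= (xi w)%:E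
                              <= choquet (upper_prob PP) xi)%E] = 1,
      upper_prob PP [set w | (xi w)%:E = choquet (lower_prob PP) xi] = 1 &
      upper_prob PP [set w | (xi w)%:E = choquet (upper_prob PP) xi] = 1].
Proof.
move=> HPP Hfa HcV Hcv _ HF0 H01 Hxi.
exact: (main_res HPP Hfa HF0 H01 Hxi HcV Hcv).
Qed.
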